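(* The category of pastures has coequalizers: for any pastures $P_1,P_2$ and morphisms $f,g:P_1\to P_2$ there is a pasture $Q$ with a morphism $q:P_2\to Q$ satisfying $q\circ f=q\circ g$, such that for every pasture $Q'$ and morphism $q':P_2\to Q'$ with $q'\circ f=q'\circ g$ there is a unique morphism $u:Q\to Q'$ with $u\circ q=q'$.
   Context: A pasture is a multiplicative monoid $P$ with a zero element $0$ (absorbing: $0\cdot x=0$ for all $x$) such that $P^\times=P\setminus\{0\}$ is an abelian group under the multiplication, together with an involution $x\mapsto -x$ of $P$ fixing $0$, and a subset $N_P\subseteq P^3$ (the nullset; one writes $a+b+c=0$ to mean $(a,b,c)\in N_P$) such that: (1) $N_P$ is invariant under permutations of the three coordinates; (2) if $a+b+c=0$ then $da+db+dc=0$ for every $d\in P$; (3) $a+b+0=0$ if and only if $a=-b$. A morphism of pastures $f:P_1\to P_2$ is a multiplicative map with $f(0)=0$, $f(1)=1$, $f(-a)=-f(a)$ for all $a$, and such that $f(a)+f(b)+f(c)=0$ in $N_{P_2}$ whenever $a+b+c=0$ in $N_{P_1}$. *)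

(* Defs.v *)
Set Implicit Arguments.

Record Pasture : Type := {
  carrier :> Type;
  pzero : carrier;
  pone : carrier;
  pmul : carrier -> carrier -> carrier;
  pneg : carrier -> carrier;
  pnull : carrier -> carrier -> carrier -> Prop;
  pmulA : forall x y z, pmul x (pmul y z) = pmul (pmul x y) z;
  pmul1l : forall x, pmul pone x = x;
  pmul1r : forall x, pmul x pone = x;
  pmul0l : forall x, pmul pzero x = pzero;
  pmul0r : forall x, pmul x pzero = pzero;
  pone_neq0 : pone <> pzero;
  pmul_neq0 : forall x y, x <> pzero -> y <> pzero -> pmul x y <> pzero;
  pmulC_units : forall x y, x <> pzero -> y <> pzero -> pmul x y = pmul y x;
  pinv_ex : forall x, x <> pzero -> exists y, y <> pzero /\ pmul x y = pone;
  pnegK : forall x, pneg (pneg x) = x;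
  pneg0 : pneg pzero = pzero;
  pnull_perm12 : forall a b c, pnull a b c -> pnull b a c;
  pnull_perm23 : forall a b c, pnull a b c -> pnull a c b;
  pnull_scale : forall d a b c, pnull a b c -> pnull (pmul d a) (pmul d b) (pmul d c);
  pnull_zero : forall a b, pnull a b pzero <-> a = pneg b
}.

Record PastureHom (P1 P2 : Pasture) : Type := {
  hfun :> carrier P1 -> carrier P2;
  hmul : forall a b, hfun (pmul P1 a b) = pmul P2 (hfun a) (hfun b);
  h0 : hfun (pzero P1) = pzero P2;
  h1 : hfun (pone P1) = pone P2;
  hneg : forall a, hfun (pneg P1 a) = pneg P2 (hfun a);
  hnull : forall a b c, pnull P1 a b c -> pnull P2 (hfun a) (hfun b) (hfun c)
}.

(* Main.v *)
Require Import Defs.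
From Stdlib Require Import Classical ClassicalEpsilon FunctionalExtensionality PropExtensionality ProofIrrelevance.
Set Implicit Arguments.

Lemma p_mulC (P : Pasture) (x y : P) : pmul P x y = pmul P y x.
Proof.
  destruct (classic (x = pzero P)) as [->|Hx].
  - now rewrite pmul0l, pmul0r.
  - destruct (classic (y = pzero P)) as [->|Hy].
    + now rewrite pmul0l, pmul0r.
    + now apply pmulC_units.
Qed.

Lemma p_mul_eq0 (P : Pasture) (x y : P) :
  pmul P x y = pzero P -> x = pzero P \/ y = pzero P.
Proof.
  intro H. apply NNPP. intro Hn. apply not_or_and in Hn as [H1 H2].
  exact (pmul_neq0 _ H1 H2 H).
Qed.

Lemma p_neg_mulr (P : Pasture) (e d : P) : pmul P e (pneg P d) = pneg P (pmul P e d).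
Proof.
  assert (H : pnull P (pneg P d) d (pzero P)) by (apply pnull_zero; reflexivity).
  apply (pnull_scale P e) in H. rewrite pmul0r in H. now apply pnull_zero in H.
Qed.

Lemma p_neg_mull (P : Pasture) (d e : P) : pmul P (pneg P d) e = pneg P (pmul P d e).
Proof. rewrite p_mulC, p_neg_mulr, p_mulC. reflexivity. Qed.

Lemma hom_eq0 (P Q : Pasture) (h : PastureHom P Q) x : h x = pzero Q -> x = pzero P.
Proof.
  intro H. apply NNPP. intro Hx. destruct (pinv_ex _ Hx) as [y [_ Hy]].
  pose proof (hmul h x y) as E. rewrite Hy, h1, H, pmul0l in E.
  exact (pone_neq0 Q E).
Qed.

Inductive CR (P1 P2 : Pasture) (f g : PastureHom P1 P2) : P2 -> P2 -> Prop :=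
| CRrefl y : CR f g y y
| CRsym y z : CR f g y z -> CR f g z y
| CRtrans y z w : CR f g y z -> CR f g z w -> CR f g y w
| CRgen x d : CR f g (pmul P2 d (f x)) (pmul P2 d (g x)).

Arguments CR {P1 P2} f g _ _.
Arguments CRrefl {P1 P2 f g} y.
Arguments CRsym {P1 P2 f g} y z _.
Arguments CRtrans {P1 P2 f g} y z w _ _.
Arguments CRgen {P1 P2 f g} x d.

Lemma CR_mull P1 P2 (f g : PastureHom P1 P2) a b c :
  CR f g a b -> CR f g (pmul P2 c a) (pmul P2 c b).
Proof.
  induction 1.
  - apply CRrefl.
  - now apply CRsym.
  - eapply CRtrans; eauto.
  - rewrite !pmulA. apply CRgen.
Qed.

Lemma CR_mul P1 P2 (f g : PastureHom P1 P2) a b c d :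
  CR f g a b -> CR f g c d -> CR f g (pmul P2 a c) (pmul P2 b d).
Proof.
  intros H1 H2. apply CRtrans with (pmul P2 a d).
  - now apply CR_mull.
  - rewrite (p_mulC _ a), (p_mulC _ b). now apply CR_mull.
Qed.

Lemma CR_neg P1 P2 (f g : PastureHom P1 P2) a b :
  CR f g a b -> CR f g (pneg P2 a) (pneg P2 b).
Proof.
  induction 1.
  - apply CRrefl.
  - now apply CRsym.
  - eapply CRtrans; eauto.
  - rewrite <- !p_neg_mull. apply CRgen.
Qed.

Lemma CR_zero P1 P2 (f g : PastureHom P1 P2) a b :
  CR f g a b -> (a = pzero P2 <-> b = pzero P2).
Proof.
  induction 1.
  - tauto.
  - tauto.
  - tauto.
  - split; intro H; apply p_mul_eq0 in H as [->| H].
    + now rewrite pmul0l.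
    + apply hom_eq0 in H. subst. now rewrite h0, pmul0r.
    + now rewrite pmul0l.
    + apply hom_eq0 in H. subst. now rewrite h0, pmul0r.
Qed.

Lemma CR_hom P1 P2 (f g : PastureHom P1 P2) Q' (q' : PastureHom P2 Q') :
  (forall x, q' (f x) = q' (g x)) -> forall a b, CR f g a b -> q' a = q' b.
Proof.
  intros Hq a b. induction 1; try congruence.
  rewrite !hmul, Hq. reflexivity.
Qed.

Definition QT P1 P2 (f g : PastureHom P1 P2) :=
  {S : P2 -> Prop | exists y, S = CR f g y}.

Definition cls P1 P2 (f g : PastureHom P1 P2) (y : P2) : QT f g :=
  exist _ (CR f g y) (ex_intro _ y eq_refl).

Lemma QT_ext P1 P2 (f g : PastureHom P1 P2) (S1 S2 : QT f g) :
  proj1_sig S1 = proj1_sig S2 -> S1 = S2.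
Proof.
  destruct S1 as [s1 p1], S2 as [s2 p2]; simpl; intro E; subst.
  f_equal. apply proof_irrelevance.
Qed.

Lemma cls_eq P1 P2 (f g : PastureHom P1 P2) a b : CR f g a b -> cls f g a = cls f g b.
Proof.
  intro H. apply QT_ext; simpl. apply functional_extensionality. intro z.
  apply propositional_extensionality. split; intro H'.
  - eapply CRtrans; [apply CRsym; exact H| exact H'].
  - eapply CRtrans; [exact H| exact H'].
Qed.

Lemma cls_inv P1 P2 (f g : PastureHom P1 P2) a b : cls f g a = cls f g b -> CR f g a b.
Proof.
  intro E. apply (f_equal (@proj1_sig _ _)) in E. simpl in E.
  assert (H : CR f g b b) by apply CRrefl. rewrite <- E in H. exact H.
Qed.

Lemma cls_surj P1 P2 (f g : PastureHom P1 P2) (S : QT f g) : exists y, S = cls f g y.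
Proof.
  destruct S as [s [y Hy]]. exists y. apply QT_ext. simpl. exact Hy.
Qed.

Definition rep P1 P2 (f g : PastureHom P1 P2) (S : QT f g) : P2 :=
  proj1_sig (constructive_indefinite_description _ (cls_surj S)).

Lemma rep_spec P1 P2 (f g : PastureHom P1 P2) (S : QT f g) : S = cls f g (rep S).
Proof.
  unfold rep. destruct (constructive_indefinite_description _ _). simpl. exact e.
Qed.

Lemma rep_cls P1 P2 (f g : PastureHom P1 P2) y : CR f g (rep (cls f g y)) y.
Proof.
  apply cls_inv. symmetry. apply rep_spec.
Qed.


Definition Qmul P1 P2 (f g : PastureHom P1 P2) (A B : QT f g) : QT f g :=
  cls f g (pmul P2 (rep A) (rep B)).
Definition Qneg P1 P2 (f g : PastureHom P1 P2) (A : QT f g) : QT f g :=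
  cls f g (pneg P2 (rep A)).
Definition Qnull P1 P2 (f g : PastureHom P1 P2) (A B C : QT f g) : Prop :=
  exists a b c, A = cls f g a /\ B = cls f g b /\ C = cls f g c /\ pnull P2 a b c.

Lemma Qmul_cls P1 P2 (f g : PastureHom P1 P2) a b :
  Qmul (cls f g a) (cls f g b) = cls f g (pmul P2 a b).
Proof. apply cls_eq. apply CR_mul; apply rep_cls. Qed.

Lemma Qneg_cls P1 P2 (f g : PastureHom P1 P2) a :
  Qneg (cls f g a) = cls f g (pneg P2 a).
Proof. apply cls_eq. apply CR_neg; apply rep_cls. Qed.

Lemma cls_neq0 P1 P2 (f g : PastureHom P1 P2) a :
  cls f g a <> cls f g (pzero P2) <-> a <> pzero P2.
Proof.
  split; intros H E.
  - subst. now apply H.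
  - apply cls_inv, CR_zero in E. tauto.
Qed.

Ltac qdes := repeat match goal with
  | S : QT _ _ |- _ => let s := fresh "s" in destruct (cls_surj S) as [s ->]; clear S
  end.

Definition Qpast P1 P2 (f g : PastureHom P1 P2) : Pasture.
Proof.
  refine {| carrier := QT f g; pzero := cls f g (pzero P2); pone := cls f g (pone P2);
            pmul := @Qmul P1 P2 f g; pneg := @Qneg P1 P2 f g; pnull := @Qnull P1 P2 f g |}.
  - intros; qdes. now rewrite !Qmul_cls, pmulA.
  - intros; qdes. now rewrite !Qmul_cls, pmul1l.
  - intros; qdes. now rewrite !Qmul_cls, pmul1r.
  - intros; qdes. now rewrite !Qmul_cls, pmul0l.
  - intros; qdes. now rewrite !Qmul_cls, pmul0r.
  - apply cls_neq0, pone_neq0.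
  - intros x y; qdes. rewrite !cls_neq0, Qmul_cls, cls_neq0. apply pmul_neq0.
  - intros x y; qdes. now rewrite !Qmul_cls, p_mulC.
  - intros x; qdes. rewrite cls_neq0. intro Hx.
    destruct (pinv_ex _ Hx) as [y [Hy E]]. exists (cls f g y).
    rewrite cls_neq0, Qmul_cls, E. auto.
  - intros; qdes. now rewrite !Qneg_cls, pnegK.
  - now rewrite Qneg_cls, pneg0.
  - intros a b c [x [y [z [-> [-> [-> H]]]]]]. exists y, x, z. auto using pnull_perm12.
  - intros a b c [x [y [z [-> [-> [-> H]]]]]]. exists x, z, y. auto using pnull_perm23.
  - intros d a b c [x [y [z [-> [-> [-> H]]]]]]; qdes. rewrite !Qmul_cls.
    do 3 eexists; repeat split; try reflexivity. now apply pnull_scale.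
  - intros a b; qdes. rewrite Qneg_cls. split.
    + intros [x [y [z [Ex [Ey [Ez H]]]]]]. apply cls_inv in Ex. apply cls_inv in Ey. apply cls_inv, CR_zero in Ez.
      destruct Ez as [Ez _]. specialize (Ez eq_refl). subst z.
      apply pnull_zero in H. subst x. apply cls_eq.
      apply CRtrans with (pneg P2 y); [exact Ex|]. apply CR_neg, CRsym, Ey.
    + intros ->. exists (pneg P2 s), s, (pzero P2). repeat split.
      now apply pnull_zero.
Defined.

Definition qhom P1 P2 (f g : PastureHom P1 P2) : PastureHom P2 (Qpast f g).
Proof.
  refine {| hfun := cls f g : P2 -> Qpast f g |}; simpl.
  - intros. symmetry. apply Qmul_cls.
  - reflexivity.
  - reflexivity.
  - intros. symmetry. apply Qneg_cls.
  - intros a b c H. exists a, b, c. auto.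
Defined.

Definition uhom P1 P2 (f g : PastureHom P1 P2) Q' (q' : PastureHom P2 Q')
  (Hq : forall x, q' (f x) = q' (g x)) : PastureHom (Qpast f g) Q'.
Proof.
  refine {| hfun := fun S : Qpast f g => q' (rep S) |}; simpl.
  - intros a b; qdes. unfold Qmul. rewrite <- hmul.
    apply (CR_hom q' Hq). apply rep_cls.
  - rewrite (CR_hom q' Hq (rep_cls _ _ _)). apply h0.
  - rewrite (CR_hom q' Hq (rep_cls _ _ _)). apply h1.
  - intros a; qdes. unfold Qneg. rewrite <- hneg.
    apply (CR_hom q' Hq). apply rep_cls.
  - intros a b c [x [y [z [-> [-> [-> H]]]]]].
    rewrite !(CR_hom q' Hq (rep_cls _ _ _)). now apply hnull.
Defined.

Theorem theorem5p5 :
  forall (P1 P2 : Pasture) (f g : PastureHom P1 P2),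
  exists (Q : Pasture) (q : PastureHom P2 Q),
    (forall x, q (f x) = q (g x)) /\
    (forall (Q' : Pasture) (q' : PastureHom P2 Q'),
       (forall x, q' (f x) = q' (g x)) ->
       exists u : PastureHom Q Q',
         (forall y, u (q y) = q' y) /\
         (forall u' : PastureHom Q Q',
            (forall y, u' (q y) = q' y) -> forall z, u' z = u z)).
Proof.
  intros P1 P2 f g. exists (Qpast f g), (qhom f g). split.
  - intro x. simpl. apply cls_eq.
    rewrite <- (pmul1l P2 (f x)), <- (pmul1l P2 (g x)). apply CRgen.
  - intros Q' q' Hq. exists (@uhom _ _ f g _ q' Hq).
    assert (Hu : forall y, @uhom _ _ f g _ q' Hq (qhom f g y) = q' y).
    { intro y. simpl. apply (CR_hom q' Hq (rep_cls _ _ _)). }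
    split; [exact Hu|].
    intros u' Hu' z. simpl in z. destruct (cls_surj z) as [y ->].
    change (cls f g y) with (qhom f g y). now rewrite Hu', Hu.
Qed.
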